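(* Let $P_0$ be a domain, $U$ a free $P_0$-module of rank four with dual $U^*=\operatorname{Hom}_{P_0}(U,P_0)$, and $x,y,z,w$ a basis of $U$ with dual basis $x^*,y^*,z^*,w^*$. Let $$\phi_3=ax^{*(2)}y^*+dx^*y^{*(2)}+ey^{*(2)}z^*+fy^{*(2)}w^*+gx^*z^{*(2)}+hy^*z^{*(2)}+iz^{*(2)}w^*+ky^*w^{*(2)}+mx^*y^*z^*+nx^*y^*w^*+py^*z^*w^*\in D_3U^*$$ with parameters in $P_0$. Assume (a) $a\neq0$, (b) $g\neq0$, and (c) $\ell\phi_3\neq0$ for all nonzero $\ell\in U$. Then $\Gamma_{\phi_3}$ is not identically zero.
   Context: $D_iU^*=\operatorname{Hom}_{P_0}(\operatorname{Sym}_iU,P_0)$; $D_\bullet U^*$ is the divided power algebra, a module over $\operatorname{Sym}_\bullet U$ via $(uv)(u')=v(uu')$. The divided power monomial $x^{*(a_1)}y^{*(a_2)}z^{*(a_3)}w^{*(a_4)}$ takes value $1$ on $x^{a_1}y^{a_2}z^{a_3}w^{a_4}$ and $0$ on all other monomials of that degree; a factor without parenthesized exponent has exponent one. $D_4U$ is the degree-$4$ divided power of $U$. For $X\in D_4U$, $\Delta(X)\in U^{\otimes4}$ is its comultiplication: for $X=\ell_1^{(e_1)}\cdots\ell_s^{(e_s)}$ with $\sum e_j=4$, the sum of all distinct words $u_1\otimes\cdots\otimes u_4$ in which the symbol $\ell_j$ occurs exactly $e_j$ times, extended linearly. $\Gamma_{\phi_3}:D_4U\otimes\bigwedge^4U\to\bigwedge^4U^*$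 is the $P_0$-linear map $\Gamma_{\phi_3}(X\otimes y_1\wedge\cdots\wedge y_4)=\sum(u_1y_1\phi_3)\wedge\cdots\wedge(u_4y_4\phi_3)$, summed over the terms of $\Delta(X)$. *)

(* Defs.v *)
From mathcomp Require Import all_boot all_order all_algebra.
Set Implicit Arguments. Unset Strict Implicit. Unset Printing Implicit Defensive.
Import GRing.Theory.
Local Open Scope ring_scope.

(* U = P0^4 as row vectors, basis x,y,z,w = the standard unit vectors
   (coordinates 0,1,2,3).  Monomials in Sym U are exponent vectors. *)
Definition mono := {ffun 'I_4 -> nat}.
Definition mdeg (t : mono) : nat := (\sum_i t i)%N.
Definition mk4 (a b c d : nat) : mono := [ffun i : 'I_4 => nth 0%N [:: a; b; c; d] i].
Definition madd1 (t : mono) (i : 'I_4) : mono := [ffun j => (t j + (i == j))%N].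
Definition munit (i : 'I_4) : mono := madd1 (mk4 0 0 0 0) i.

(* An element of D_k U^* = Hom(Sym_k U, P0) is given by its values on the
   degree-k monomials; we represent elements of D U^* as functions mono -> R,
   only the values on degree-k monomials being relevant for D_k U^*. *)
Definition DUs (R : Type) := mono -> R.

(* divided power monomial: value 1 on the monomial t0, 0 on the others *)
Definition dmono (R : nzRingType) (t0 : mono) : DUs R := fun t => (t == t0)%:R.

(* module structure: (u v)(u') = v(u u') *)
Definition contract (R : nzRingType) (u : 'rV[R]_4) (v : DUs R) : DUs R :=
  fun t => \sum_(i < 4) u ord0 i * v (madd1 t i).

Definition Dzero (R : nzRingType) (k : nat) (v : DUs R) : Prop :=
  forall t : mono, mdeg t = k -> v t = 0.

Definition phi3 (R : nzRingType) (a d e f g h i k m n p : R) : DUs R :=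
  fun t =>
    a * dmono R (mk4 2 1 0 0) t + d * dmono R (mk4 1 2 0 0) t
  + e * dmono R (mk4 0 2 1 0) t + f * dmono R (mk4 0 2 0 1) t
  + g * dmono R (mk4 1 0 2 0) t + h * dmono R (mk4 0 1 2 0) t
  + i * dmono R (mk4 0 0 2 1) t + k * dmono R (mk4 0 1 0 2) t
  + m * dmono R (mk4 1 1 1 0) t + n * dmono R (mk4 1 1 0 1) t
  + p * dmono R (mk4 0 1 1 1) t.

(* Gamma_phi evaluated on X (x) y_1 /\ ... /\ y_4, where
   X = l_1^(e_1) ... l_s^(e_s).  The words of Delta(X) are the maps
   w : {1..4} -> {1..s} in which the symbol j occurs exactly e_j times.
   The result lies in /\^4 U^*, free of rank one on x*/\y*/\z*/\w*; we return
   its coordinate: the wedge of four covectors v_1..v_4 is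
   det (v_k(basis_j)) * x*/\y*/\z*/\w*. *)
Definition Gamma (R : comNzRingType) (phi : DUs R) (s : nat)
    (l : 'I_s -> 'rV[R]_4) (e : 'I_s -> nat) (y : 'I_4 -> 'rV[R]_4) : R :=
  \sum_(w : {ffun 'I_4 -> 'I_s} | [forall j, #|[set q | w q == j]| == e j])
    \det (\matrix_(q < 4, j < 4) contract (l (w q)) (contract (y q) phi) (munit j)).

(* Main.v *)
Require Import Defs.
From mathcomp Require Import all_boot all_order all_algebra ring zify.
Import GRing.Theory.
Local Open Scope ring_scope.

Module Helpers.
Set Implicit Arguments. Unset Strict Implicit. Unset Printing Implicit Defensive.

Lemma mk4_eq A B C D A' B' C' D' :
  (mk4 A B C D == mk4 A' B' C' D') = [&& A == A', B == B', C == C' & D == D']%N.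
Proof.
apply/eqP/idP.
  move/ffunP=> H; have := H (inord 0); have := H (inord 1); have := H (inord 2); have := H (inord 3).
  by rewrite !ffunE !inordK //= => -> -> -> ->; rewrite !eqxx.
case/and4P=> /eqP-> /eqP-> /eqP-> /eqP->; done.
Qed.

Lemma madd1_mk4 A B C D (i : 'I_4) :
  madd1 (mk4 A B C D) i = mk4 (A + (val i == 0%N)) (B + (val i == 1%N)) (C + (val i == 2%N)) (D + (val i == 3%N)).
Proof.
apply/ffunP=> j; rewrite !ffunE.
case: j => [[|[|[|[|//]]]] Hj] /=; by case: i => [[|[|[|[|//]]]] Hi].
Qed.

Lemma munitE (i : 'I_4) : munit i = mk4 (val i == 0%N) (val i == 1%N) (val i == 2%N) (val i == 3%N).
Proof. by rewrite /munit madd1_mk4. Qed.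

Section P.
Variable R : comNzRingType.
Variables a d e f g h i k m n p : R.
Definition ph := phi3 a d e f g h i k m n p.

Lemma phE A B C D : ph (mk4 A B C D) =
    a * ([&& A == 2, B == 1, C == 0 & D == 0]%N)%:R + d * ([&& A == 1, B == 2, C == 0 & D == 0]%N)%:R
  + e * ([&& A == 0, B == 2, C == 1 & D == 0]%N)%:R + f * ([&& A == 0, B == 2, C == 0 & D == 1]%N)%:R
  + g * ([&& A == 1, B == 0, C == 2 & D == 0]%N)%:R + h * ([&& A == 0, B == 1, C == 2 & D == 0]%N)%:R
  + i * ([&& A == 0, B == 0, C == 2 & D == 1]%N)%:R + k * ([&& A == 0, B == 1, C == 0 & D == 2]%N)%:R
  + m * ([&& A == 1, B == 1, C == 1 & D == 0]%N)%:R + n * ([&& A == 1, B == 1, C == 0 & D == 1]%N)%:R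
  + p * ([&& A == 0, B == 1, C == 1 & D == 1]%N)%:R.
Proof. by rewrite /ph /phi3 /dmono !mk4_eq. Qed.

Lemma sum_delta (u : 'I_4) (F : 'I_4 -> R) :
  \sum_(j < 4) (delta_mx 0 u : 'rV[R]_4) ord0 j * F j = F u.
Proof.
rewrite (bigD1 u) //= big1; last first.
  by move=> j nj; rewrite mxE (negbTE nj) andbF mul0r.
by rewrite mxE !eqxx mul1r addr0.
Qed.

Lemma entryE (phi : DUs R) (u v : 'I_4) t :
  contract (delta_mx 0 u) (contract (delta_mx 0 v) phi) t = phi (madd1 (madd1 t u) v).
Proof. by rewrite /contract sum_delta sum_delta. Qed.

Definition det4p (F : nat -> nat -> R) : R :=
  0
  + F 0%N 0%N * F 1%N 1%N * F 2%N 2%N * F 3%N 3%N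
  - F 0%N 0%N * F 1%N 1%N * F 2%N 3%N * F 3%N 2%N
  - F 0%N 0%N * F 1%N 2%N * F 2%N 1%N * F 3%N 3%N
  + F 0%N 0%N * F 1%N 2%N * F 2%N 3%N * F 3%N 1%N
  + F 0%N 0%N * F 1%N 3%N * F 2%N 1%N * F 3%N 2%N
  - F 0%N 0%N * F 1%N 3%N * F 2%N 2%N * F 3%N 1%N
  - F 0%N 1%N * F 1%N 0%N * F 2%N 2%N * F 3%N 3%N
  + F 0%N 1%N * F 1%N 0%N * F 2%N 3%N * F 3%N 2%N
  + F 0%N 1%N * F 1%N 2%N * F 2%N 0%N * F 3%N 3%N
  - F 0%N 1%N * F 1%N 2%N * F 2%N 3%N * F 3%N 0%N
  - F 0%N 1%N * F 1%N 3%N * F 2%N 0%N * F 3%N 2%N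
  + F 0%N 1%N * F 1%N 3%N * F 2%N 2%N * F 3%N 0%N
  + F 0%N 2%N * F 1%N 0%N * F 2%N 1%N * F 3%N 3%N
  - F 0%N 2%N * F 1%N 0%N * F 2%N 3%N * F 3%N 1%N
  - F 0%N 2%N * F 1%N 1%N * F 2%N 0%N * F 3%N 3%N
  + F 0%N 2%N * F 1%N 1%N * F 2%N 3%N * F 3%N 0%N
  + F 0%N 2%N * F 1%N 3%N * F 2%N 0%N * F 3%N 1%N
  - F 0%N 2%N * F 1%N 3%N * F 2%N 1%N * F 3%N 0%N
  - F 0%N 3%N * F 1%N 0%N * F 2%N 1%N * F 3%N 2%N
  + F 0%N 3%N * F 1%N 0%N * F 2%N 2%N * F 3%N 1%N
  + F 0%N 3%N * F 1%N 1%N * F 2%N 0%N * F 3%N 2%N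
  - F 0%N 3%N * F 1%N 1%N * F 2%N 2%N * F 3%N 0%N
  - F 0%N 3%N * F 1%N 2%N * F 2%N 0%N * F 3%N 1%N
  + F 0%N 3%N * F 1%N 2%N * F 2%N 1%N * F 3%N 0%N.

Lemma det4f (F : nat -> nat -> R) :
  \det (\matrix_(i < 4, j < 4) F i j) = det4p F.
Proof.
rewrite /det4p.
rewrite (expand_det_row _ 0) !big_ord_recl big_ord0 /cofactor.
rewrite !(expand_det_row _ 0) !big_ord_recl !big_ord0 /cofactor.
rewrite !(expand_det_row _ 0) !big_ord_recl !big_ord0 /cofactor.
rewrite !det_mx11 !mxE /=.
ring.
Qed.

End P.
Section P.
Variable R : comNzRingType.
Variables a d e f g h i k m n p : R.

Definition wd s (i0 i1 i2 i3 : 'I_s) : {ffun 'I_4 -> 'I_s} :=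
  [ffun q : 'I_4 => nth i0 [:: i0; i1; i2; i3] q].

Lemma sum_ffun4 s (G : {ffun 'I_4 -> 'I_s} -> R) :
  \sum_w G w = \sum_i0 \sum_i1 \sum_i2 \sum_i3 G (wd i0 i1 i2 i3).
Proof.
case: s G => [|s] G.
  by rewrite big_ord0; apply: big1 => w _; case: (w ord0).
pose hh (t : 'I_s.+1 * 'I_s.+1 * 'I_s.+1 * 'I_s.+1) := wd t.1.1.1 t.1.1.2 t.1.2 t.2.
pose hh' (w : {ffun 'I_4 -> 'I_s.+1}) := (w (inord 0), w (inord 1), w (inord 2), w (inord 3)).
rewrite (reindex hh); last first.
  exists hh' => [[[[i0 i1] i2] i3] _|w _].
    by rewrite /hh' /hh /wd !ffunE !inordK.
  apply/ffunP => q; rewrite /hh /hh' /wd ffunE /=.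
  by case: q => [[|[|[|[|//]]]] Hq] /=; congr (w _); apply: val_inj; rewrite /= inordK.
by rewrite [RHS]pair_big [RHS]pair_big [RHS]pair_big.
Qed.

Lemma card_wd s (i0 i1 i2 i3 j : 'I_s) :
  #|[set q | wd i0 i1 i2 i3 q == j]| = ((i0 == j) + (i1 == j) + (i2 == j) + (i3 == j))%N.
Proof.
rewrite -sum1_card big_mkcond /= !big_ord_recl big_ord0 !inE !ffunE /=.
by case: (i0 == j); case: (i1 == j); case: (i2 == j); case: (i3 == j).
Qed.

Lemma forall_I2 (Q : pred 'I_2) : [forall j, Q j] = Q ord0 && Q ord_max.
Proof.
apply/forallP/andP => [H|[H0 H1] [[|[|//]] Hj]]; first by split.
  by have -> : Ordinal Hj = ord0 by apply: val_inj.
by have -> : Ordinal Hj = ord_max by apply: val_inj.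
Qed.

Lemma forall_I1 (Q : pred 'I_1) : [forall j, Q j] = Q ord0.
Proof.
apply/forallP/idP => [H|H0 [[|//] Hj]]; first by [].
by have -> : Ordinal Hj = ord0 by apply: val_inj.
Qed.

Lemma Gamma_basis (phi : DUs R) s (lx : 'I_s -> 'I_4) (ex : 'I_s -> nat) :
  Gamma phi (fun r => delta_mx 0 (lx r)) ex (fun q => delta_mx 0 q) =
  \sum_i0 \sum_i1 \sum_i2 \sum_i3
    (if [forall j, ((i0 == j) + (i1 == j) + (i2 == j) + (i3 == j))%N == ex j]
     then det4p (fun a b => phi (madd1 (madd1 (munit (inord b)) (lx (wd i0 i1 i2 i3 (inord a)))) (inord a)))
     else 0).
Proof.
rewrite /Gamma big_mkcond sum_ffun4; do 4! (apply: eq_bigr => ? _).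
rewrite (eq_forallb (fun j => congr1 (fun x => x == _)%N (card_wd _ _ _ _ j))).
case: ifP => // _; rewrite -det4f; congr (\det _); apply/matrixP => q j.
by rewrite !mxE entryE !inord_val.
Qed.

Definition ox : 'I_4 := @Ordinal 4 0 isT.
Definition oy : 'I_4 := @Ordinal 4 1 isT.
Definition oz : 'I_4 := @Ordinal 4 2 isT.
Definition ow : 'I_4 := @Ordinal 4 3 isT.
Definition lx2 (u v : 'I_4) (r : 'I_2) : 'I_4 := if val r == 0%N then u else v.
Definition ex2 (u v : nat) (r : 'I_2) : nat := if val r == 0%N then u else v.

Definition code (A B C D : nat) : nat :=
  if [&& A == 2, B == 1, C == 0 & D == 0]%N then 1%N else
  if [&& A == 1, B == 2, C == 0 & D == 0]%N then 2%N else
  if [&& A == 0, B == 2, C == 1 & D == 0]%N then 3%N else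
  if [&& A == 0, B == 2, C == 0 & D == 1]%N then 4%N else
  if [&& A == 1, B == 0, C == 2 & D == 0]%N then 5%N else
  if [&& A == 0, B == 1, C == 2 & D == 0]%N then 6%N else
  if [&& A == 0, B == 0, C == 2 & D == 1]%N then 7%N else
  if [&& A == 0, B == 1, C == 0 & D == 2]%N then 8%N else
  if [&& A == 1, B == 1, C == 1 & D == 0]%N then 9%N else
  if [&& A == 1, B == 1, C == 0 & D == 1]%N then 10%N else
  if [&& A == 0, B == 1, C == 1 & D == 1]%N then 11%N else
  0%N.

Definition coefs : seq R := [:: 0; a; d; e; f; g; h; i; k; m; n; p].

Lemma eqS0 (x : nat) : (x.+1 == 0)%N = false. Proof. by []. Qed.

Lemma phE2 A B C D : ph a d e f g h i k m n p (mk4 A B C D) = nth 0 coefs (code A B C D).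
Proof.
rewrite phE /code.
case: A => [|[|[|A]]]; case: B => [|[|[|B]]]; case: C => [|[|[|C]]]; case: D => [|[|[|D]]].
all: by rewrite /= ?eqSS ?eqS0 /= ?mulr0 ?mulr1 ?addr0 ?add0r.
Qed.

Lemma det4p_ext (F G : nat -> nat -> R) :
  (forall x y, (x < 4)%N -> (y < 4)%N -> F x y = G x y) -> det4p F = det4p G.
Proof. by move=> H; rewrite /det4p !H. Qed.

Lemma Gamma_basis2 s (lx : 'I_s -> 'I_4) (ex : 'I_s -> nat) :
  Gamma (ph a d e f g h i k m n p) (fun r => delta_mx 0 (lx r)) ex (fun q => delta_mx 0 q) =
  \sum_i0 \sum_i1 \sum_i2 \sum_i3
    (if [forall j, ((i0 == j) + (i1 == j) + (i2 == j) + (i3 == j))%N == ex j]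
     then det4p (fun x y => let u := val (lx (nth i0 [:: i0; i1; i2; i3] x)) in
        nth 0 coefs (code ((y == 0) + (u == 0) + (x == 0)) ((y == 1) + (u == 1) + (x == 1))
                          ((y == 2) + (u == 2) + (x == 2)) ((y == 3) + (u == 3) + (x == 3)))%N)
     else 0).
Proof.
rewrite Gamma_basis; do 4! (apply: eq_bigr => ? _).
case: ifP => // _; apply: det4p_ext => x y Hx Hy.
by rewrite munitE !madd1_mk4 /wd ffunE phE2 /= !inordK.
Qed.

Lemma sum4_I2 (G : 'I_2 -> 'I_2 -> 'I_2 -> 'I_2 -> R) :
  \sum_i0 \sum_i1 \sum_i2 \sum_i3 G i0 i1 i2 i3 =
  G ord0 ord0 ord0 ord0 + G ord0 ord0 ord0 ord_max + G ord0 ord0 ord_max ord0 + G ord0 ord0 ord_max ord_max + G ord0 ord_max ord0 ord0 + G ord0 ord_max ord0 ord_max + G ord0 ord_max ord_max ord0 + G ord0 ord_max ord_max ord_max + G ord_max ord0 ord0 ord0 + G ord_max ord0 ord0 ord_max + G ord_max ord0 ord_max ord0 + G ord_max ord0 ord_max ord_max + G ord_max ord_max ord0 ord0 + G ord_max ord_max ord0 ord_max + G ord_max ord_max ord_max ord0 + G ord_max ord_max ord_max ord_max.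
Proof.
rewrite !big_ord_recl !big_ord0 !addr0.
have -> : lift ord0 ord0 = ord_max :> 'I_2 by apply: val_inj.
by rewrite !addrA.
Qed.

Lemma sum4_I1 (G : 'I_1 -> 'I_1 -> 'I_1 -> 'I_1 -> R) :
  \sum_i0 \sum_i1 \sum_i2 \sum_i3 G i0 i1 i2 i3 = G ord0 ord0 ord0 ord0.
Proof. by rewrite !big_ord_recl !big_ord0 !addr0. Qed.
End P.
Section P.
Variable R : comNzRingType.
Variables a d e f g h i k m n p : R.
Lemma G_x3y : Gamma (ph a d e f g h i k m n p) (fun r => delta_mx 0 (lx2 ox oy r)) (ex2 3 1) (fun q => delta_mx 0 q)
  = a*g*(n^+2) - a^+2*g*k.
Proof. Time (rewrite Gamma_basis2 sum4_I2 !forall_I2 /= /det4p /=; ring). Qed.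
Lemma G_x2z2 : Gamma (ph a d e f g h i k m n p) (fun r => delta_mx 0 (lx2 ox oz r)) (ex2 2 2) (fun q => delta_mx 0 q)
  = g^+2*n^+2 - 2*a*g*i*n + a^+2*i^+2.
Proof. Time (rewrite Gamma_basis2 sum4_I2 !forall_I2 /= /det4p /=; ring). Qed.
Lemma G_xy3 : Gamma (ph a d e f g h i k m n p) (fun r => delta_mx 0 (lx2 ox oy r)) (ex2 1 3) (fun q => delta_mx 0 q)
  = - a*f^+2*g - d^+2*g*k + 2*d*f*g*n + d*k* m^+2 - 2*d* m*n* p + d*h*n^+2 - a*d*h*k + a*d* p^+2.
Proof. Time (rewrite Gamma_basis2 sum4_I2 !forall_I2 /= /det4p /=; ring). Qed.
Lemma G_z4 : Gamma (ph a d e f g h i k m n p) (fun r : 'I_1 => delta_mx 0 oz) (fun _ => 4%N) (fun q => delta_mx 0 q)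
  = i^+2* m^+2 - 2*g*i* m* p + g^+2* p^+2.
Proof. Time (rewrite (Gamma_basis2 _ _ _ _ _ _ _ _ _ _ _ (fun _ : 'I_1 => oz)) sum4_I1 !forall_I1 /= /det4p /=; ring). Qed.
End P.

End Helpers.
Import Helpers.

Theorem proposition6p3 (P0 : idomainType) (a d e f g h i k m n p : P0) :
  a != 0 -> g != 0 ->
  (forall l : 'rV[P0]_4, l != 0 ->
     ~ Dzero 2 (contract l (phi3 a d e f g h i k m n p))) ->
  exists (s : nat) (l : 'I_s -> 'rV[P0]_4) (ex : 'I_s -> nat) (y : 'I_4 -> 'rV[P0]_4),
    (\sum_(j < s) ex j)%N = 4%N /\
    Gamma (phi3 a d e f g h i k m n p) l ex y != 0.
Proof.
move=> a0 g0 Hc.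
have S2 : forall u v, (u + v = 4)%N -> (\sum_(j < 2) ex2 u v j)%N = 4%N.
  by move=> u v H; rewrite !big_ord_recl big_ord0 /= addn0.
case: (eqVneq (a*g*(n^+2) - a^+2*g*k) 0) => [E1|NE]; last first.
  exists 2%N, (fun r => delta_mx 0 (lx2 ox oy r)), (ex2 3 1), (fun q => delta_mx 0 q).
  by split; [apply: S2 | rewrite (G_x3y a d e f g h i k m n p)].
case: (eqVneq (g^+2*n^+2 - 2*a*g*i*n + a^+2*i^+2) 0) => [E2|NE]; last first.
  exists 2%N, (fun r => delta_mx 0 (lx2 ox oz r)), (ex2 2 2), (fun q => delta_mx 0 q).
  by split; [apply: S2 | rewrite (G_x2z2 a d e f g h i k m n p)].
case: (eqVneq (i^+2 * m^+2 - 2*g*i * m * p + g^+2 * p^+2) 0) => [E3|NE]; last first.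
  exists 1%N, (fun r : 'I_1 => delta_mx 0 oz), (fun _ => 4%N), (fun q => delta_mx 0 q).
  by split; [rewrite big_ord1 | rewrite (G_z4 a d e f g h i k m n p)].
case: (eqVneq (- a*f^+2*g - d^+2*g*k + 2*d*f*g*n + d*k * m^+2 - 2*d * m*n * p + d*h*n^+2 - a*d*h*k + a*d * p^+2) 0) => [E4|NE]; last first.
  exists 2%N, (fun r => delta_mx 0 (lx2 ox oy r)), (ex2 1 3), (fun q => delta_mx 0 q).
  by split; [apply: S2 | rewrite (G_xy3 a d e f g h i k m n p)].
exfalso.
have Kr : a * k = n * n.
  apply/eqP; rewrite eq_sym -subr_eq0; apply/eqP.
  have : a * g * (n * n - a * k) = 0 by rewrite -E1; ring.
  by move/eqP; rewrite !mulf_eq0 (negbTE a0) (negbTE g0) /= => /eqP.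
have Ir : a * i = g * n.
  apply/eqP; rewrite -subr_eq0; apply/eqP.
  have : (a * i - g * n) ^+ 2 = 0 by rewrite -E2; ring.
  by move/eqP; rewrite expf_eq0 /= => /eqP.
have Pr : a * p = n * m.
  have H3 : (i * m - g * p) ^+ 2 = 0 by rewrite -E3; ring.
  move/eqP: H3; rewrite expf_eq0 /= subr_eq0 => /eqP H3.
  apply/eqP; rewrite -subr_eq0; apply/eqP.
  have : g * (a * p - n * m) = 0.
    have -> : g * (a * p - n * m) = (a * i - g * n) * m + a * (g * p - i * m) by ring.
    by rewrite Ir H3 !subrr mul0r mulr0 addr0.
  by move/eqP; rewrite mulf_eq0 (negbTE g0) /= => /eqP.
have Fr : a * f = d * n.
  have H : g * (a * f - d * n) ^+ 2 = 0.
    have -> : g * (a * f - d * n) ^+ 2 = - a * (- a*f^+2*g - d^+2*g*k + 2*d*f*g*n + d*k * m^+2 - 2*d * m*n * p + d*h*n^+2 - a*d*h*k + a*d * p^+2)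
       + (d^+2*g + a*d*h - d* m^+2) * (n * n - a * k) + d*(n* m - a* p)^+2 by ring.
    by rewrite E4 Kr Pr !subrr; ring.
  move/eqP: H; rewrite mulf_eq0 (negbTE g0) /= expf_eq0 /= subr_eq0.
  by move/eqP.
pose l : 'rV[P0]_4 := \row_j (if val j == 0%N then n else if val j == 3%N then - a else 0).
apply: (Hc l).
  apply/eqP => /matrixP /(_ ord0 ow); rewrite !mxE /= => /eqP.
  by rewrite oppr_eq0 (negbTE a0).
move=> t Ht.
have tE : t = mk4 (t ox) (t oy) (t oz) (t ow).
  apply/ffunP => -[[|[|[|[|//]]]] Hj]; rewrite ffunE /=; congr (t _); exact: val_inj.
have Hs := Ht; rewrite {1}tE /mdeg !big_ord_recl big_ord0 !ffunE /= addn0 in Hs.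
rewrite tE; move: Hs; move: (t ox) (t oy) (t oz) (t ow) => A B C D Hs.
rewrite /contract !big_ord_recl big_ord0 !mxE /= !madd1_mk4 /=.
rewrite -!/(ph a d e f g h i k m n p _) !phE2.
case: A Hs => [|[|[|A]]]; case: B => [|[|[|B]]]; case: C => [|[|[|C]]]; case: D => [|[|[|D]]] => Hs.
all: try (exfalso; lia).
all: rewrite /= ?eqSS ?eqS0 /= ?mulr0 ?mul0r ?addr0 ?add0r ?mulNr ?Kr ?Ir ?Pr ?Fr.
all: ring.
Qed.
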